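(* Let $T$ be a supercritical Galton–Watson tree with finite alphabet $\mathbb{A}$ and offspring distribution $W$, let $\mathscr{A}$ be a nonempty collection of nonempty subsets of $\mathbb{A}$, and let $g_{\mathscr{A}}(s)=\mathbb{P}(W^{(s)}\notin\overline{\mathscr{A}})$ for $s\in[0,1]$. If $g_{\mathscr{A}}$ has some fixed point $<1$, then almost surely, conditioned on nonextinction, there exist infinitely many $v\in T$ such that $T^v$ contains an $\mathscr{A}$-subtree.
   Context: Trees with alphabet $\mathbb{A}$ are prefix-closed subsets of $\mathbb{A}^*$ containing the empty word; $W_T(a)=\{i:ai\in T\}$; $T^v=\{j:vj\in T\}$. The Galton–Watson tree with offspring distribution $W$ (random subset of $\mathbb{A}$, $\mathbb{P}(i\in W)>0$ for all $i$) is $T_0=\{\emptyset\}$, $T_n=\{aj:a\in T_{n-1},j\in W_a\}$ with independent copies $W_a$; supercritical means $\mathbb{E}|W|>1$; nonextinction means $T_n\neq\emptyset$ for all $n$. An $\mathscr{A}$-subtree of a tree $S$ is a tree $S'\subseteq S$ with $W_{S'}(a)\in\mathscr{A}$ for all $a\in S'$. $\overline{\mathscr{A}}=\{S\subseteq\mathbb{A}:\exists X\in\mathscr{A}, X\subseteq S\}$. $W^{(s)}=W\cap Y$ with $Y$ independent, $\mathbb{P}(Y=B)=(1-s)^{|B|}s^{|\mathbb{A}\setminus B|}$. *)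

(* Defs.v *)
From HB Require Import structures.
From mathcomp Require Import all_boot all_order all_algebra.
From mathcomp Require Import all_classical all_reals all_analysis.
Set Implicit Arguments. Unset Strict Implicit. Unset Printing Implicit Defensive.
Import Order.TTheory GRing.Theory Num.Theory.
Local Open Scope classical_set_scope.
Local Open Scope ring_scope.

Section GW.
Variable A : finType.

(* A tree with alphabet A: prefix-closed set of words containing the empty word.
   The word "a j" (a followed by letter j) is [rcons a j]. *)
Definition is_tree (S : set (seq A)) : Prop :=
  S [::] /\ forall a j, S (rcons a j) -> S a.

Definition W_of (S : set (seq A)) (a : seq A) : set A := [set i | S (rcons a i)].

Definition subtree_at (T : set (seq A)) (v : seq A) : set (seq A) :=
  [set j | T (v ++ j)].

Definition is_Asubtree (calA : {set {set A}}) (S S' : set (seq A)) : Prop :=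
  [/\ is_tree S', S' `<=` S &
      forall a, S' a -> exists2 X, X \in calA & [set i | i \in X] = W_of S' a].

Definition upclosure (calA : {set {set A}}) : {set {set A}} :=
  [set S : {set A} | [exists X in calA, X \subset S]].

(* The Galton-Watson tree built from the offspring sets W v (v a word):
   T_0 = {[::]}, T_n = {a j : a \in T_{n-1}, j \in W a}; T = \bigcup_n T_n. *)
Definition GW_tree (Omega : Type) (W : seq A -> Omega -> {set A}) (om : Omega)
  : set (seq A) :=
  [set v | forall a j w, v = a ++ j :: w -> j \in W a om].

Definition nonextinct (Omega : Type) (W : seq A -> Omega -> {set A}) (om : Omega)
  : Prop := forall n : nat, exists v, size v = n /\ GW_tree W om v.

(* g_calA(s) = P(W^(s) \notin overline calA), W^(s) = W \cap Y with Y independent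
   of W, P(Y = C) = (1-s)^|C| s^|A \ C|, W with law p. *)
Definition gA (R : realType) (p : {set A} -> R) (calA : {set {set A}}) (s : R) : R :=
  \sum_(B : {set A}) \sum_(C : {set A})
     (if (B :&: C) \in upclosure calA then 0
      else p B * ((1 - s) ^+ #|C| * s ^+ #|~: C|)).

End GW.

(* Main.v *)
Require Import Defs.
From HB Require Import structures.
From mathcomp Require Import all_boot all_order all_algebra.
From mathcomp Require Import all_classical all_reals all_analysis.
From mathcomp Require Import ring lra.
Import Order.TTheory GRing.Theory Num.Theory.
Set Implicit Arguments. Unset Strict Implicit. Unset Printing Implicit Defensive.
Local Open Scope classical_set_scope.
Local Open Scope ring_scope.

Section Conf.
Variable A : finType.
Variable R : realType.
Variable p : {set A} -> R.

Fixpoint conf (n : nat) : finType :=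
  if n is n'.+1 then ({set A} * {ffun A -> conf n'})%type else unit.

Fixpoint wt (n : nat) : conf n -> R :=
  match n return conf n -> R with
  | 0 => fun _ => 1
  | n'.+1 => fun c => p c.1 * \prod_j wt (c.2 j) end.

Lemma sum_confS n (F : conf n.+1 -> R) :
  \sum_(c : conf n.+1) F c = \sum_(B : {set A}) \sum_(f : {ffun A -> conf n}) F (B, f).
Proof. by rewrite pair_bigA; apply: eq_bigr => -[]. Qed.

Lemma wfactor n (F : {set A} -> R) (G : {set A} -> A -> conf n -> R) :
  \sum_(c : conf n.+1) wt c * (F c.1 * \prod_j G c.1 j (c.2 j)) =
  \sum_B p B * F B * \prod_j \sum_(c : conf n) wt c * G B j c.
Proof.
rewrite sum_confS; apply: eq_bigr => B _.
rewrite (eq_bigr (fun f : {ffun A -> conf n} =>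
   p B * F B * \prod_j (wt (f j) * G B j (f j)))); last first.
  by move=> f _ /=; rewrite big_split /=; ring.
by rewrite -mulr_sumr bigA_distr_bigA.
Qed.


Lemma sum_conf1 : \sum_(c : conf 1) wt c = \sum_B p B.
Proof.
have := @wfactor 0 (fun _ => 1) (fun _ _ _ => 1).
rewrite (eq_bigr (fun c => wt c)); last by move=> c _; rewrite big1 // !mulr1.
move=> ->; apply: eq_bigr => B _.
rewrite big1 ?mulr1 // => j _ /=.
by rewrite (big_pred1 tt) ?mulr1 // => -[].
Qed.

Hypothesis p_sum1 : \sum_B p B = 1.

Lemma wt_sum1 n : \sum_(c : conf n) wt c = 1.
Proof.
elim: n => [|n IH].
  by rewrite /= (big_pred1 tt) // => -[].
have := @wfactor n (fun _ => 1) (fun _ _ _ => 1).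
rewrite (eq_bigr (fun c => wt c)); last by move=> c _; rewrite big1 // !mulr1.
move=> ->.
rewrite -[RHS]p_sum1; apply: eq_bigr => B _.
rewrite big1 ?mulr1 // => j _.
by rewrite (eq_bigr (fun c => wt c)) // => c _; rewrite mulr1.
Qed.


Lemma sum_wt_bool n (phi : conf n -> bool) (b : bool) :
  \sum_(c : conf n) wt c * (phi c == b)%:R =
  if b then \sum_(c : conf n) wt c * (phi c)%:R
  else 1 - \sum_(c : conf n) wt c * (phi c)%:R.
Proof.
case: b.
  by apply: eq_bigr => c _; rewrite eqb_id.
have -> : 1 - \sum_(c : conf n) wt c * (phi c)%:R =
   \sum_(c : conf n) (wt c - wt c * (phi c)%:R) by rewrite sumrB wt_sum1.
apply: eq_bigr => c _.
by case: (phi c); rewrite /= ?mulr1n ?mulr0n ?mulr1 ?mulr0 ?subrr ?subr0.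
Qed.

Definition hgen (t : R) := \sum_(B : {set A}) p B * t ^+ #|B|.

Lemma wfactor_all n (phi : conf n -> bool) :
  \sum_(c : conf n.+1) wt c * ([forall j in c.1, phi (c.2 j)])%:R =
  hgen (\sum_(c : conf n) wt c * (phi c)%:R).
Proof.
transitivity (\sum_(c : conf n.+1) wt c * ((fun _ => 1) c.1 *
   \prod_j (fun B j c => if j \in B then (phi c)%:R else 1) c.1 j (c.2 j))).
  apply: eq_bigr => -[B f] _ /=; rewrite mul1r; congr (_ * _).
  case: (boolP [forall j in B, phi (f j)]) => [/forallP H|].
    by rewrite big1 // => j _; case: ifP => // jB; have := H j; rewrite jB /= => ->.
  rewrite negb_forall => /existsP [j]; rewrite negb_imply => /andP [jB /negbTE pj].
  by rewrite (bigD1 j) //= jB pj mul0r.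
rewrite (@wfactor n (fun _ => 1) (fun B j c => if j \in B then (phi c)%:R else 1)).
apply: eq_bigr => B _.
rewrite mulr1 (bigID (mem B)) /=.
have -> : \prod_(i | i \notin B) \sum_(c : conf n) wt c * (if i \in B then (phi c)%:R else 1) = 1.
  apply: big1 => j /negbTE ->; rewrite (eq_bigr (fun c => wt c)) ?wt_sum1 // => c _.
  by rewrite mulr1.
rewrite mulr1 (eq_bigr (fun _ => \sum_c wt c * (phi c)%:R)) ?prodr_const //.
by move=> j ->.
Qed.

Variable calA : {set {set A}}.

Fixpoint hconf (n : nat) : conf n -> bool :=
  match n return conf n -> bool with
  | 0 => fun _ => true
  | n'.+1 => fun c => [set j in c.1 | hconf (c.2 j)] \in upclosure calA end.

Lemma ind_split (B : {set A}) (phi : A -> bool) :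
  ([set j in B | phi j] \notin upclosure calA)%:R =
  \sum_(C : {set A}) ((B :&: C) \notin upclosure calA)%:R *
       \prod_j (phi j == (j \in C))%:R :> R.
Proof.
rewrite (bigD1 [set j | phi j]%SET) //=.
rewrite [X in _ + X]big1 ?addr0; last first.
  move=> C HC.
  case: (boolP [forall j, phi j == (j \in C)]) => [/forallP H|].
    exfalso; move/negP: HC; apply; apply/eqP/setP => j.
    by rewrite inE (eqP (H j)).
  rewrite negb_forall => /existsP [j /negbTE Hj].
  by rewrite (bigD1 j) //= Hj mul0r mulr0.
rewrite big1 ?mulr1; last by move=> j _; rewrite inE eqxx.
rewrite (_ : B :&: _ = [set j in B | phi j]%SET) //.
by apply/setP => j; rewrite !inE.
Qed.

Lemma prod_ifC (C : {set A}) (e : R) :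
  \prod_j (if j \in C then e else 1 - e) = e ^+ #|C| * (1 - e) ^+ #|~: C|.
Proof.
rewrite (bigID (mem C)) /=.
have -> : \prod_(i | i \in C) (if i \in C then e else 1 - e) = \prod_(i in C) e.
  by apply: eq_bigr => j ->.
have -> : \prod_(i | i \notin C) (if i \in C then e else 1 - e) = \prod_(i in ~: C) (1 - e).
  by apply: eq_big => [j|j]; rewrite ?inE // => /negbTE ->.
by rewrite !prodr_const.
Qed.

Definition econf n := \sum_(c : conf n) wt c * (hconf c)%:R.

Lemma hconf_rec n :
  \sum_(c : conf n.+1) wt c * (~~ hconf c)%:R = gA p calA (1 - econf n).
Proof.
rewrite (eq_bigr (fun c : conf n.+1 => \sum_(C : {set A}) wt c *
   (((c.1 :&: C) \notin upclosure calA)%:R *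
       \prod_j (hconf (c.2 j) == (j \in C))%:R))); last first.
  by move=> [B f] _ /=; rewrite (ind_split B (fun j => hconf (f j))) mulr_sumr.
rewrite exchange_big /gA [RHS]exchange_big /=; apply: eq_bigr => C _.
rewrite (@wfactor n (fun B => ((B :&: C) \notin upclosure calA)%:R)
   (fun B j c => (hconf c == (j \in C))%:R)).
apply: eq_bigr => B _.
rewrite (eq_bigr (fun j => if j \in C then econf n else 1 - econf n)); last first.
  by move=> j _; rewrite sum_wt_bool; case: (j \in C).
rewrite prod_ifC subKr.
by case: (B :&: C \in upclosure calA); rewrite /= ?mulr0n ?mulr1n ?mulr0 ?mul0r ?mulr1.
Qed.

End Conf.


Lemma up_mono (A : finType) (calA : {set {set A}}) (X Y : {set A}) :
  X \subset Y -> X \in upclosure calA -> Y \in upclosure calA.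
Proof.
move=> XY; rewrite /upclosure !inE => /existsP [Z /andP [ZA ZX]].
by apply/existsP; exists Z; rewrite ZA (fintype.subset_trans ZX XY).
Qed.

Section Mono.
Variable A : finType.
Variable R : realType.
Variable psi : {set A} -> R.
Hypothesis psi_dec : forall C i, psi (i |: C) <= psi C.

Definition Phi (sigma : A -> R) :=
  \sum_(C : {set A}) psi C * \prod_j (if j \in C then 1 - sigma j else sigma j).

Lemma sum_split_elt (F : {set A} -> R) (i : A) :
  \sum_(C : {set A}) F C = \sum_(C : {set A} | i \notin C) (F C + F (i |: C)).
Proof.
rewrite big_split /= [LHS](bigID (fun C : {set A} => i \notin C)) /=; congr (_ + _).
rewrite (reindex_onto (fun C : {set A} => i |: C) (fun C : {set A} => C :\ i)) /=; last first.
  by move=> C; rewrite negbK => iC; rewrite finset.setD1K.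
apply: eq_bigl => C; rewrite setU11 /=; apply/eqP/idP => [<-|/finset.setU1K //].
by rewrite !inE eqxx.
Qed.

Lemma Phi_mono1 sigma sigma' i :
  (forall j, j != i -> sigma j = sigma' j) -> (forall j, 0 <= sigma j <= 1) ->
  sigma i <= sigma' i -> Phi sigma <= Phi sigma'.
Proof.
move=> Heq Hr Hi.
rewrite /Phi (sum_split_elt _ i) [X in _ <= X](sum_split_elt _ i).
apply: ler_sum => C iC.
set Pi := \prod_(j | j != i) (if j \in C then 1 - sigma j else sigma j).
have prodC s : (forall j, j != i -> s j = sigma j) ->
    \prod_j (if j \in C then 1 - s j else s j) = s i * Pi.
  move=> H; rewrite (bigD1 i) //= (negbTE iC); congr (_ * _).
  by apply: eq_bigr => j ji; rewrite H.
have prodiC s : (forall j, j != i -> s j = sigma j) ->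
    \prod_j (if j \in i |: C then 1 - s j else s j) = (1 - s i) * Pi.
  move=> H; rewrite (bigD1 i) //= setU11; congr (_ * _).
  by apply: eq_bigr => j ji; rewrite in_setU1 (negbTE ji) /= H.
rewrite !prodC ?prodiC // => [|j ji|j ji]; try by rewrite Heq.
have P0 : 0 <= Pi.
  apply: prodr_ge0 => j _; have /andP [h0 h1] := Hr j.
  by case: (j \in C); rewrite ?subr_ge0.
have := psi_dec C i.
set a := psi C; set b := psi (i |: C).
move=> hab.
have : 0 <= (sigma' i - sigma i) * Pi * (a - b).
  by apply: mulr_ge0; [apply: mulr_ge0; rewrite ?subr_ge0|rewrite subr_ge0].
move=> H; rewrite -subr_ge0; apply: le_trans H _; rewrite le_eqVlt; apply/orP; left; apply/eqP; ring.
Qed.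

Lemma Phi_mono s t : 0 <= s -> s <= t -> t <= 1 ->
  Phi (fun _ => s) <= Phi (fun _ => t).
Proof.
move=> s0 st t1.
pose sg m := fun j : A => if (enum_rank j < m)%N then t else s.
have E0 : Phi (fun _ => s) = Phi (sg 0).
  by congr Phi; apply: funext => j; rewrite /sg ltn0.
have EA : Phi (fun _ => t) = Phi (sg #|A|).
  by congr Phi; apply: funext => j; rewrite /sg ltn_ord.
rewrite E0 EA.
suff: forall m, Phi (sg 0) <= Phi (sg m) by [].
elim=> // m IH; apply: le_trans IH _.
case: (ltnP m #|A|) => hm.
  apply: (@Phi_mono1 _ _ (enum_val (Ordinal hm))).
  - move=> j ji; rewrite /sg.
    have H : (enum_rank j : nat) != m.
      apply: contra ji => /eqP hj; apply/eqP.
      by rewrite -(enum_rankK j); congr enum_val; apply: val_inj.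
    by rewrite [in RHS]ltnS [in RHS]leq_eqVlt (negbTE H).
  - by move=> j; rewrite /sg; case: ifP => _; apply/andP; split => //;
      [apply: le_trans st|apply: le_trans t1].
  - by rewrite /sg enum_valK /= ltnn leqnn.
have -> : sg m.+1 = sg m.
  apply: funext => j; rewrite /sg.
  have h1 : (enum_rank j < m)%N by apply: leq_trans (ltn_ord _) hm.
  by rewrite h1 (leq_trans h1 (leqnSn _)).
by [].
Qed.

End Mono.

Section GAmono.
Variable A : finType.
Variable R : realType.
Variable p : {set A} -> R.
Hypothesis p_ge0 : forall B, 0 <= p B.
Variable calA : {set {set A}}.

Lemma gA_Phi s : gA p calA s = \sum_B p B *
  Phi (fun C => ((B :&: C) \notin upclosure calA)%:R) (fun _ : A => s).
Proof.
rewrite /gA; apply: eq_bigr => B _; rewrite /Phi mulr_sumr; apply: eq_bigr => C _.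
have := prod_ifC C (1 - s); rewrite subKr => ->.
by case: (B :&: C \in upclosure calA) => /=; rewrite ?mul0r ?mulr0 ?mul1r.
Qed.

Lemma gA_mono s t : 0 <= s -> s <= t -> t <= 1 -> gA p calA s <= gA p calA t.
Proof.
move=> s0 st t1; rewrite !gA_Phi; apply: ler_sum => B _.
apply: ler_wpM2l => //; apply: Phi_mono => // C i.
case: (boolP (B :&: (i |: C) \in upclosure calA)) => [_|H] /=.
  by case: (_ \in _).
have -> : (B :&: C \in upclosure calA) = false.
  apply/negbTE; apply: contra H; apply: up_mono.
  by apply: finset.setIS; apply: finset.subsetUr.
by [].
Qed.

Hypothesis p_sum1 : \sum_B p B = 1.

Lemma wt_ge0 n (c : conf A n) : 0 <= wt p c.
Proof.
elim: n c => [|n IH] c /=; first by [].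
by apply: mulr_ge0 => //; apply: prodr_ge0 => j _.
Qed.

Lemma econf_range n : 0 <= econf p calA n <= 1.
Proof.
apply/andP; split.
  by apply: sumr_ge0 => c _; apply: mulr_ge0 => //; apply: wt_ge0.
rewrite -(@wt_sum1 _ _ _ p_sum1 n); apply: ler_sum => c _.
by case: (hconf calA c); rewrite /= ?mulr1n ?mulr0n ?mulr1 ?mulr0 // wt_ge0.
Qed.

Lemma qN_le (s : R) : 0 <= s -> s < 1 -> gA p calA s = s ->
  forall N, 1 - econf p calA N <= s.
Proof.
move=> s0 s1 fs; elim=> [|N IH].
  have -> : econf p calA 0 = 1.
    rewrite /econf (eq_bigr (fun c => wt p c)) ?wt_sum1 //.
    by move=> c _; rewrite /= mulr1.
  by rewrite subrr.
rewrite (_ : 1 - econf p calA N.+1 =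
   \sum_(c : conf A N.+1) wt p c * (~~ hconf calA c)%:R); last first.
  rewrite (eq_bigr (fun c => wt p c * (hconf calA c == false)%:R)); last first.
    by move=> c _; rewrite eqbF_neg.
  by rewrite sum_wt_bool.
rewrite hconf_rec // -[X in _ <= X]fs; apply: gA_mono => //; last by apply: ltW.
by have /andP [h0 h1] := econf_range N; rewrite subr_ge0.
Qed.

End GAmono.

Section Iter.
Variable A : finType.
Variable R : realType.
Variable p : {set A} -> R.
Hypothesis p_ge0 : forall B, 0 <= p B.
Hypothesis p_sum1 : \sum_B p B = 1.
Variable calA : {set {set A}}.
Variable N : nat.

Fixpoint afl (k : nat) : conf A (k + N) -> bool :=
  match k return conf A (k + N) -> bool with
  | 0 => fun c => ~~ hconf calA c
  | k'.+1 => fun c => [forall j in c.1, afl (c.2 j)] end.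

Fixpoint dd (k : nat) : conf A (k + N) -> bool :=
  match k return conf A (k + N) -> bool with
  | 0 => fun c => false
  | k'.+1 => fun c => [forall j in c.1, dd (c.2 j)] end.

Arguments afl : clear implicits.
Arguments dd : clear implicits.

Lemma dd_afl k c : dd k c -> afl k c.
Proof.
elim: k c => [|k IH] c //=.
by move=> /forallP H; apply/forallP => j; apply/implyP => jc; apply: IH; have := H j; rewrite jc.
Qed.

Lemma E_afl k : \sum_(c : conf A (k + N)) wt p c * (afl k c)%:R =
  iter k (hgen p) (1 - econf p calA N).
Proof.
elim: k => [|k IH].
  rewrite /= -(sum_wt_bool p_sum1 (@hconf _ calA N) false).
  by apply: eq_bigr => c _; rewrite eqbF_neg.
by rewrite iterS -IH -(wfactor_all p_sum1).
Qed.

Lemma E_dd k : \sum_(c : conf A (k + N)) wt p c * (dd k c)%:R = iter k (hgen p) 0.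
Proof.
elim: k => [|k IH].
  by rewrite /= big1 // => c _; rewrite mulr0.
by rewrite iterS -IH -(wfactor_all p_sum1).
Qed.

Lemma E_bad k : \sum_(c : conf A (k + N)) wt p c * (afl k c && ~~ dd k c)%:R =
  iter k (hgen p) (1 - econf p calA N) - iter k (hgen p) 0.
Proof.
rewrite -E_afl -E_dd -sumrB; apply: eq_bigr => c _.
case: (boolP (dd k c)) => [h|h]; first by rewrite (dd_afl h) /= mulr0 subrr.
by rewrite andbT /= mulr0 subr0.
Qed.

End Iter.


Section Analysis.
Variable A : finType.
Variable R : realType.
Variable p : {set A} -> R.
Hypothesis p_ge0 : forall B, 0 <= p B.
Hypothesis p_sum1 : \sum_B p B = 1.

Local Notation h := (hgen p).

Definition Dq (a b : R) := \sum_(B : {set A}) p B * \sum_(i < #|B|) b ^+ (#|B|.-1 - i) * a ^+ i.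

Lemma h_diff a b : h b - h a = (b - a) * Dq a b.
Proof.
rewrite /hgen /Dq -sumrB mulr_sumr; apply: eq_bigr => B _.
by rewrite -mulrBr subrXX mulrCA.
Qed.

Lemma h1 : h 1 = 1.
Proof. by rewrite /hgen -[RHS]p_sum1; apply: eq_bigr => B _; rewrite expr1n mulr1. Qed.

Lemma h_ge0 x : 0 <= x -> 0 <= h x.
Proof. by move=> x0; apply: sumr_ge0 => B _; apply: mulr_ge0 => //; apply: exprn_ge0. Qed.

Lemma h_mono x y : 0 <= x -> x <= y -> h x <= h y.
Proof.
move=> x0 xy; apply: ler_sum => B _; apply: ler_wpM2l => //.
by apply: lerXn2r => //; rewrite nnegrE //; apply: le_trans xy.
Qed.

Lemma h_le1 x : 0 <= x -> x <= 1 -> h x <= 1.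
Proof. by move=> x0 x1; rewrite -h1; apply: h_mono. Qed.

Lemma iter_mono k x y : 0 <= x -> x <= y -> y <= 1 ->
  [/\ 0 <= iter k h x, iter k h x <= iter k h y & iter k h y <= 1].
Proof.
move=> x0 xy y1; elim: k => [|k [a0 ab b1]] /=; first by split.
split; first by apply: h_ge0.
  by apply: h_mono.
by apply: h_le1 => //; apply: le_trans ab.
Qed.

Lemma Dq_ge0 a b : 0 <= a -> 0 <= b -> 0 <= Dq a b.
Proof.
move=> a0 b0; apply: sumr_ge0 => B _; apply: mulr_ge0 => //.
by apply: sumr_ge0 => i _; apply: mulr_ge0; apply: exprn_ge0.
Qed.

Variable B0 : {set A}.
Hypothesis pB0 : 0 < p B0.
Hypothesis cB0 : (2 <= #|B0|)%N.

Lemma Dq_gap a b (s : R) : 0 <= a -> a <= b -> b <= s -> s < 1 ->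
  Dq a b <= Dq b 1 - p B0 * (1 - s).
Proof.
move=> a0 ab bs s1.
have b0 : 0 <= b by apply: le_trans ab.
have b1 : b <= 1 by apply: le_trans bs (ltW s1).
have term : forall (B : {set A}) (i : 'I_#|B|), 0 <= 1 ^+ (#|B|.-1 - i) * b ^+ i - b ^+ (#|B|.-1 - i) * a ^+ i.
  move=> B i; rewrite expr1n mul1r subr_ge0.
  apply: le_trans (_ : 1 * b ^+ i <= _); last by rewrite mul1r.
  apply: ler_pM; rewrite ?exprn_ge0 ?exprn_ile1 //.
  by apply: lerXn2r; rewrite ?nnegrE.
rewrite lerBrDr -lerBrDl /Dq -sumrB (bigD1 B0) //= -mulrBr -sumrB.
rewrite -[X in X <= _]addr0; apply: lerD; last first.
  apply: sumr_ge0 => B _; rewrite -mulrBr; apply: mulr_ge0 => //; rewrite -sumrB.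
  by apply: sumr_ge0 => i _; apply: term.
apply: ler_wpM2l; first by apply: ltW.
have n0 : (0 < #|B0|)%N by apply: leq_trans cB0.
rewrite (bigD1 (Ordinal n0)) //=.
rewrite -[X in X <= _]addr0; apply: lerD; last by apply: sumr_ge0 => i _; apply: term.
rewrite !expr0 !mulr1 expr1n subn0 lerB // .
apply: le_trans bs; rewrite -[X in _ <= X]expr1.
apply: ler_wiXn2l => //; by case: #|B0| cB0 => [|[|n]].
Qed.

Lemma main_analysis (s M : R) : 0 <= s -> s < 1 -> h s <= s ->
  (forall k, M <= iter k h s - iter k h 0) -> M <= 0.
Proof.
move=> s0 s1 hs HM.
rewrite leNgt; apply/negP => M0.
pose x k := iter k h 0; pose y k := iter k h s.
have x0 k : 0 <= x k by elim: k => [|k IH] //=; apply: h_ge0.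
have xy k : x k <= y k.
  by elim: k => [|k IH] //=; apply: h_mono.
have ys k : y k <= s /\ y k.+1 <= y k.
  elim: k => [|k [IH1 IH2]] /=; first by [].
  split; first by apply: le_trans hs; apply: h_mono => //; apply: le_trans (xy k).
  by apply: h_mono => //; apply: le_trans (xy k.+1).
have xinc k : x k <= x k.+1.
  elim: k => [|k IH] /=; first by apply: h_ge0.
  by apply: h_mono.
pose kap := p B0 * (1 - s).
have kap0 : 0 < kap by apply: mulr_gt0; rewrite // subr_gt0.
pose eps := M * (1 - s) * kap / 4.
have eps0 : 0 < eps by apply: divr_gt0 => //; apply: mulr_gt0 => //; apply: mulr_gt0; rewrite // subr_gt0.
pose d k := (x k.+1 - x k) + (y k - y k.+1).
have [k dk] : exists k, d k <= eps.
  apply: contrapT => Hn.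
  have Hall : forall k, eps < d k.
    by move=> k; rewrite ltNge; apply/negP => hk; apply: Hn; exists k.
  have Hsum : forall k, k%:R * eps <= x k + (y 0%N - y k).
    elim=> [|k IH]; first by rewrite mul0r /x /= subrr addr0.
    have := Hall k; rewrite /d => hk.
    rewrite -natr1 mulrDl mul1r; apply: le_trans (lerD IH (ltW hk)) _.
    by rewrite le_eqVlt; apply/orP; left; apply/eqP; ring.
  have [K HK] : exists K : nat, 1 / eps < K%:R.
    exists (Num.Def.archi_bound (1 / eps)); apply: archi_boundP.
    by apply: divr_ge0 => //; apply: ltW.
  have := Hsum K.
  have : x K + (y 0%N - y K) <= s.
    have := xy K; rewrite /y /= => hK; lra.
  move=> h2 h3.
  have : K%:R * eps < 1 by apply: le_lt_trans h3 (le_lt_trans h2 s1).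
  rewrite -ltr_pdivlMr // => h4.
  by have := lt_trans HK h4; rewrite ltxx.
set a := x k; set b := y k.
have hxa : x k.+1 = h a by [].
have hyb : y k.+1 = h b by [].
have u0 : 0 <= h a - a by rewrite -hxa subr_ge0; apply: xinc.
have v0 : 0 <= b - h b by rewrite -hyb subr_ge0; case: (ys k).
have uv : (h a - a) + (b - h b) <= eps by rewrite -hxa -hyb.
have Mb : M <= b - a by apply: HM.
have E1 := h_diff a b.
have E2 := h_diff b 1; rewrite h1 in E2.
have a0 : 0 <= a by apply: x0.
have ab : a <= b by apply: xy.
have bs : b <= s by case: (ys k).
have G := Dq_gap a0 ab bs s1.
have Dab0 := Dq_ge0 a0 (le_trans a0 ab).
set Dab := Dq a b in E1 G Dab0; set Db1 := Dq b 1 in E2 G.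
set ha := h a in E1 u0 uv; set hb := h b in E1 E2 v0 uv.
have dpos : 0 <= (b - a) * (1 - b).
  by apply: mulr_ge0; rewrite subr_ge0 //; apply: le_trans bs (ltW s1).
have G2 : (b - a) * (1 - b) * Dab <= (b - a) * (1 - b) * (Db1 - kap).
  by apply: ler_wpM2l.
have key : (b - a) * (1 - b) * kap <= 2 * eps.
  have e1 : (b - a) * (1 - b) * Dab = (1 - b) * ((b - a) - ((ha - a) + (b - hb))).
    rewrite -[(b - a) * (1 - b)]mulrC -mulrA -E1; ring.
  have e2 : (b - a) * (1 - b) * (Db1 - kap) = (b - a) * ((1 - b) + (b - hb)) - (b - a) * (1 - b) * kap.
    have : (1 - b) * Db1 = (1 - b) + (b - hb) by rewrite -E2; ring.
    move=> e; rewrite mulrBr -e; ring.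
  rewrite e1 e2 in G2.
  have b1 : b <= 1 by apply: le_trans bs (ltW s1).
  have : (1 - b) * ((ha - a) + (b - hb)) <= eps.
    apply: le_trans uv; rewrite -[X in _ <= X]mul1r; apply: ler_wpM2r.
      by apply: addr_ge0.
    have b0 : 0 <= b by apply: le_trans a0 ab.
    lra.
  have : (b - a) * (b - hb) <= eps.
    apply: le_trans uv; rewrite -[X in _ <= X]mul1r.
    apply: le_trans (_ : 1 * (b - hb) <= _).
      apply: ler_wpM2r => //; lra.
    rewrite !mul1r; lra.
  nra.
have low : M * (1 - s) * kap <= (b - a) * (1 - b) * kap.
  apply: ler_wpM2r; first by apply: ltW.
  apply: ler_pM => //; first by apply: ltW.
  by rewrite subr_ge0; apply: ltW.
  by rewrite lerB.
have : M * (1 - s) * kap = 4 * eps by rewrite /eps; field.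
move=> e4; rewrite e4 in low.
have := le_trans low key; lra.
Qed.

End Analysis.

Section Exist.
Variable A : finType.
Variable R : realType.
Variable p : {set A} -> R.
Hypothesis p_ge0 : forall B, 0 <= p B.
Hypothesis p_sum1 : \sum_B p B = 1.
Hypothesis supercrit : 1 < \sum_(B : {set A}) p B * (#|B|%:R).

Lemma exists_B0 : exists B0 : {set A}, 0 < p B0 /\ (2 <= #|B0|)%N.
Proof.
apply: contrapT => Hn.
have : \sum_(B : {set A}) p B * (#|B|%:R) <= \sum_B p B.
  apply: ler_sum => B _.
  case: (ltrgt0P (p B)) => [pB||->]; last by rewrite mul0r.
  - case: (ltnP 1 #|B|) => hB; first by exfalso; apply: Hn; exists B.
    rewrite -[X in _ <= X]mulr1; apply: ler_wpM2l; first by apply: ltW.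
    by rewrite (_ : (1:R) = 1%:R) // ler_nat.
  - by move=> pB; have := p_ge0 B; rewrite leNgt pB.
by rewrite p_sum1 leNgt supercrit.
Qed.

Lemma bernoulli_ineq (e : R) n : 0 <= e -> e <= 1 -> 1 - n%:R * e <= (1 - e) ^+ n.
Proof.
move=> e0 e1; elim: n => [|n IH]; first by rewrite mul0r subr0 expr0.
rewrite exprSr -natr1.
have h0 : 0 <= (1 - e) ^+ n by apply: exprn_ge0; rewrite subr_ge0.
have : (1 - n%:R * e) * (1 - e) <= (1 - e) ^+ n * (1 - e).
  by apply: ler_wpM2r; rewrite ?subr_ge0.
have : 0 <= n%:R * e * e by apply: mulr_ge0 => //; apply: mulr_ge0.
nra.
Qed.

Lemma exists_s (s0 : R) : 0 <= s0 -> s0 < 1 ->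
  exists s, [/\ s0 <= s, s < 1 & hgen p s <= s].
Proof.
move=> s00 s01.
set m := \sum_(B : {set A}) p B * (#|B|%:R).
set n := #|A|.
set eps := (1 - m^-1) / (n.+1)%:R.
have m0 : 0 < m by apply: lt_trans supercrit.
have mi1 : m^-1 < 1 by rewrite invf_lt1.
have mi0 : 0 < m^-1 by rewrite invr_gt0.
have eps0 : 0 < eps by apply: divr_gt0; rewrite ?subr_gt0 ?ltr0n.
have neps : n%:R * eps <= 1 - m^-1.
  rewrite /eps mulrA ler_pdivrMr ?ltr0n // mulrC ler_wpM2l ?subr_ge0 ?ler_nat //.
  by apply: ltW.
have eps1 : eps <= 1.
  rewrite /eps ler_pdivrMr ?ltr0n // mul1r; apply: le_trans (_ : 1 <= _).
    by rewrite lerBlDr lerDl; apply: ltW.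
  by rewrite ler1n.
set t := 1 - eps.
have key : forall s, t <= s -> s <= 1 -> 1 <= (s ^+ n) * m.
  move=> s ts s1.
  have t0 : 0 <= t by rewrite subr_ge0.
  have := bernoulli_ineq n (ltW eps0) eps1; rewrite -/t => hb.
  have : t ^+ n <= s ^+ n by apply: lerXn2r; rewrite ?nnegrE //; apply: le_trans ts.
  move=> hts.
  have : 1 - n%:R * eps <= s ^+ n by apply: le_trans hts.
  move=> h1.
  have : m^-1 <= s ^+ n by apply: le_trans h1; lra.
  by rewrite -ler_pdivrMr // div1r.
exists (Num.max s0 t); split.
- by rewrite le_max lexx.
- by rewrite gt_max s01 /t ltrBlDr ltrDl.
set s := Num.max s0 t.
have ts : t <= s by rewrite le_max lexx orbT.
have s1 : s <= 1 by rewrite ge_max (ltW s01) /t lerBlDr lerDl ltW.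
have sp : 0 <= s by rewrite le_max s00.
have := h_diff p s 1; rewrite h1 // => E.
have D1 : 1 <= Dq p s 1.
  apply: le_trans (key s ts s1) _; rewrite /m /Dq mulr_sumr; apply: ler_sum => B _.
  rewrite mulrCA; apply: ler_wpM2l => //.
  apply: le_trans (_ : \sum_(i < #|B|) s ^+ n <= _).
    by rewrite sumr_const card_ord mulr_natr.
  apply: ler_sum => i _; rewrite expr1n mul1r.
  apply: ler_wiXn2l => //; apply: leq_trans (ltnW (ltn_ord i)) _; apply: max_card.
have : (1 - s) * 1 <= (1 - s) * Dq p s 1 by apply: ler_wpM2l; rewrite ?subr_ge0.
lra.
Qed.

End Exist.


Lemma bigI_all (T : Type) (I : eqType) (s : seq I) (F : I -> set T) :
  \big[setI/setT]_(v <- s) F v = [set om | forall v, v \in s -> F v om].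
Proof.
elim: s => [|v s IH]; first by rewrite big_nil; apply/seteqP; split.
rewrite big_cons IH; apply/seteqP; split => om /=.
  by move=> [h1 h2] u; rewrite in_cons => /orP [/eqP ->|/h2].
move=> H; split; first by apply: H; rewrite mem_head.
by move=> u us; apply: H; rewrite in_cons us orbT.
Qed.

Section Prob.
Variable R : realType.
Variable d : measure_display.
Variable Omega : measurableType d.
Variable P : probability Omega R.
Variable A : finType.
Variable p : {set A} -> R.
Variable W : seq A -> Omega -> {set A}.
Hypothesis W_meas : forall v B, measurable [set om | W v om = B].
Hypothesis W_iid : forall (vs : seq (seq A)) (Bs : seq A -> {set A}), uniq vs ->
      P (\big[setI/setT]_(v <- vs) [set om | W v om = Bs v])
      = ((\prod_(v <- vs) p (Bs v))%:E).

Fixpoint extract (om : Omega) (v : seq A) (n : nat) : conf A n :=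
  match n return conf A n with
  | 0 => tt
  | n'.+1 => (W v om, [ffun j => extract om (rcons v j) n']) end.

Fixpoint rws (n : nat) : seq (seq A) :=
  if n is n'.+1 then [::] :: [seq j :: r | j <- enum A, r <- rws n'] else [::].

Fixpoint lab (n : nat) : conf A n -> seq A -> {set A} :=
  match n return conf A n -> seq A -> {set A} with
  | 0 => fun _ _ => finset.set0
  | n'.+1 => fun c r => if r is j :: r' then lab (c.2 j) r' else c.1 end.

Arguments lab : clear implicits.

Lemma rws_uniq n : uniq (rws n).
Proof.
elim: n => [|n IH] //=; apply/andP; split.
  by apply/negP => /allpairsP [[j r] [_ _]].
apply: allpairs_uniq => //; first by apply: enum_uniq.
by move=> [j1 r1] [j2 r2] _ _ /= [-> ->].
Qed.

Lemma extract_iff om v n (c : conf A n) :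
  extract om v n = c <-> forall r, r \in rws n -> W (v ++ r) om = lab n c r.
Proof.
elim: n v c => [|n IH] v c /=.
  by case: c; split => //.
case: c => B f /=; split.
  move=> [<- <-] r; rewrite in_cons => /orP [/eqP ->|]; first by rewrite cats0.
  move=> /allpairsP [[j r'] [_ hr' ->]] /=.
  rewrite ffunE -cat_rcons.
  by have [+ _] := IH (rcons v j) (extract om (rcons v j) n); apply.
move=> H; congr pair.
  by have := H [::] (mem_head _ _); rewrite cats0.
apply/ffunP => j; rewrite ffunE; apply/IH => r hr.
rewrite cat_rcons; apply: (H (j :: r)).
by rewrite in_cons; apply/orP; right; apply: (allpairs_f (fun j r => j :: r)) => //; rewrite mem_enum.
Qed.

Lemma ext_set n (c : conf A n) :
  [set om | extract om [::] n = c] =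
  \big[setI/setT]_(r <- rws n) [set om | W r om = lab n c r].
Proof.
rewrite bigI_all; apply/seteqP; split => om /=.
  by move=> /extract_iff H r /H.
by move=> H; apply/extract_iff => r /H.
Qed.

Lemma ext_meas n (c : conf A n) : measurable [set om | extract om [::] n = c].
Proof.
rewrite ext_set; elim: (rws n) => [|r s IH]; first by rewrite big_nil.
by rewrite big_cons; apply: measurableI.
Qed.

Lemma prod_lab n (c : conf A n) : \prod_(r <- rws n) p (lab n c r) = wt p c.
Proof.
elim: n c => [|n IH] c /=; first by rewrite big_nil.
rewrite big_cons /= big_allpairs_dep /= big_enum /=.
by congr (_ * _); apply: eq_bigr => j _; apply: IH.
Qed.

Lemma P_conf n (c : conf A n) : P [set om | extract om [::] n = c] = (wt p c)%:E.
Proof. by rewrite ext_set W_iid ?rws_uniq // prod_lab. Qed.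

Lemma P_list n (s : seq (conf A n)) : uniq s ->
  measurable [set om | extract om [::] n \in s] /\
  P [set om | extract om [::] n \in s] = (\sum_(c <- s) wt p c)%:E.
Proof.
elim: s => [|c s IH] /=.
  rewrite big_nil (_ : [set om | _ \in [::]] = set0) ?measure0 //.
  by apply/seteqP; split => om.
move=> /andP [cs us]; have [m1 e1] := IH us.
have -> : [set om | extract om [::] n \in c :: s] =
   [set om | extract om [::] n = c] `|` [set om | extract om [::] n \in s].
  apply/seteqP; split => om /=; rewrite in_cons.
    by move=> /orP [/eqP ->|]; [left|right].
  by move=> [->|->]; rewrite ?eqxx ?orbT.
split; first by apply: measurableU => //; apply: ext_meas.
have dj : [set om | extract om [::] n = c] `&` [set om | extract om [::] n \in s] = set0.
  by apply/seteqP; split => om //= [-> hc]; rewrite hc in cs.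
have := measureU P (ext_meas c) m1 dj.
by rewrite /= => ->; rewrite e1 big_cons EFinD -P_conf.
Qed.

Lemma P_pred n (phi : pred (conf A n)) :
  measurable [set om | phi (extract om [::] n)] /\
  P [set om | phi (extract om [::] n)] = (\sum_(c : conf A n) wt p c * (phi c)%:R)%:E.
Proof.
have [m1 e1] := P_list (enum_uniq phi).
have E : [set om | phi (extract om [::] n)] = [set om | extract om [::] n \in enum phi].
  by apply/seteqP; split => om /=; rewrite mem_enum.
rewrite E; split => //; rewrite e1 big_enum /= big_mkcond /=; congr EFin.
by apply: eq_bigr => c _; rewrite (_ : (c \in phi) = phi c) //; case: (phi c); rewrite /= ?mulr1 ?mulr0.
Qed.

End Prob.


Section Trees.
Variable A : finType.
Variable Omega : Type.
Variable W : seq A -> Omega -> {set A}.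
Variable om : Omega.

Local Notation T := (GW_tree W om).

Lemma GW_nil : T [::].
Proof. by move=> [|x a] j w. Qed.

Lemma GW_rcons a j : T (rcons a j) <-> T a /\ j \in W a om.
Proof.
split.
  move=> H; split; last by apply: (H a j [::]); rewrite cats1.
  move=> a' j' w' ea; apply: (H a' j' (rcons w' j)).
  by rewrite ea rcons_cat rcons_cons.
move=> [Ha Hj] a' j' w; case/lastP: w => [|w' x].
  by rewrite cats1 => /rcons_inj [ea ej]; subst.
rewrite -rcons_cons -rcons_cat => /rcons_inj [ea ej].
by apply: (Ha a' j' w').
Qed.

Lemma GW_cat v j u : T (v ++ j :: u) -> j \in W v om.
Proof. by move=> H; apply: (H v j u). Qed.

Lemma GW_prefix v u : T (v ++ u) -> T v.
Proof. by move=> H a j w ea; apply: (H a j (w ++ u)); rewrite ea -catA. Qed.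

Lemma GW_is_tree : is_tree T.
Proof.
by split; [apply: GW_nil|move=> a j /GW_rcons []].
Qed.

Lemma GW_W_of a : T a -> W_of T a = [set i | i \in W a om].
Proof.
move=> Ta; apply/seteqP; split => i /=.
  by move=> /GW_rcons [].
by move=> Hi; apply/GW_rcons.
Qed.

End Trees.

Section Infinite.
Variable A : finType.
Variable calA : {set {set A}}.
Hypothesis calA_elts_ne : (finset.set0 : {set A}) \notin calA.

Lemma Asub_shift (S S' : set (seq A)) u :
  is_Asubtree calA S S' -> S' u ->
  is_Asubtree calA [set r | S (u ++ r)] [set r | S' (u ++ r)].
Proof.
move=> [[t0 tr] sub ch] Su; split.
- split; first by rewrite /= cats0.
  by move=> a j /=; rewrite -rcons_cat => /tr.
- by move=> r /= /sub.
- move=> a /= /ch [X XA HX]; exists X => //; rewrite HX.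
  by apply/seteqP; split => i; rewrite /W_of /= rcons_cat.
Qed.

Lemma Asub_sizes (S S' : set (seq A)) :
  is_Asubtree calA S S' -> forall n, exists u, S' u /\ size u = n.
Proof.
move=> [[t0 tr] sub ch]; elim=> [|n [u [Su su]]]; first by exists [::].
have [X XA HX] := ch u Su.
have : X != finset.set0 by apply: contra calA_elts_ne => /eqP <-.
move=> /set0Pn [i iX].
exists (rcons u i); split; last by rewrite size_rcons su.
have : W_of S' u i by rewrite -HX.
by [].
Qed.

Lemma infinite_of (S : set (seq A)) v S' :
  S v -> is_Asubtree calA (subtree_at S v) S' ->
  infinite_set [set w | S w /\ exists S'', is_Asubtree calA (subtree_at S w) S''].
Proof.
move=> Sv HS' /finite_seqP [s Hs].
have [u [S'u su]] := Asub_sizes HS' (\max_(x <- s | xpredT x) size x).+1.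
have inS : [set w | S w /\ exists S'', is_Asubtree calA (subtree_at S w) S''] (v ++ u).
  split.
    by have [_ sub _] := HS'; apply: sub.
  exists [set r | S' (u ++ r)].
  have := Asub_shift HS' S'u.
  have -> : [set r | subtree_at S v (u ++ r)] = subtree_at S (v ++ u).
    by apply/seteqP; split => r /=; rewrite /subtree_at /= catA.
  by [].
rewrite Hs /= in inS.
have := @leq_bigmax_seq _ s xpredT size (v ++ u) inS erefl.
rewrite size_cat => h.
have : (size u <= \max_(x <- s | xpredT x) size x)%N by apply: leq_trans h; apply: leq_addl.
by rewrite su ltnn.
Qed.

End Infinite.


Section Construct.
Variable d : measure_display.
Variable Omega : measurableType d.
Variable A : finType.
Variable W : seq A -> Omega -> {set A}.
Variable om : Omega.
Variable calA : {set {set A}}.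

Local Notation T := (GW_tree W om).
Local Notation ext := (extract W om).

Definition Hw v N := hconf calA (ext v N).

Lemma Hw_S v N : Hw v N.+1 = ([set j in W v om | Hw (rcons v j) N] \in upclosure calA).
Proof.
rewrite /Hw /=.
have -> : [set j in W v om | hconf calA ([ffun j0 => ext (rcons v j0) N] j)] =
   [set j in W v om | hconf calA (ext (rcons v j) N)] by apply/setP => j; rewrite !inE ffunE.
by [].
Qed.

Lemma Hw_decr N v : Hw v N.+1 -> Hw v N.
Proof.
elim: N v => [|N IH] v; first by [].
rewrite !Hw_S; apply: up_mono; apply/fintype.subsetP => j; rewrite !inE => /andP [-> /IH] //.
Qed.

Lemma Hw_le N M v : (N <= M)%N -> Hw v M -> Hw v N.
Proof.
elim: M => [|M IH]; first by rewrite leqn0 => /eqP ->.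
rewrite leq_eqVlt => /orP [/eqP -> //|]; rewrite ltnS => NM H.
by apply: IH NM (Hw_decr H).
Qed.

Definition good v := forall N, Hw v N.
Definition Xinf v := [set j in W v om | `[< good (rcons v j) >]]%SET.

Lemma good_step v : good v -> Xinf v \in upclosure calA.
Proof.
move=> g.
have : forall j, exists N, good (rcons v j) \/ ~~ Hw (rcons v j) N.
  move=> j; case: (pselect (good (rcons v j))) => [hg|hg]; first by exists 0; left.
  move/existsNP: hg => [N HN]; exists N; right; by apply/negP.
move=> /choice [f Hf].
set M := \max_(j : A) f j.
have XM : [set j in W v om | Hw (rcons v j) M] \in upclosure calA by rewrite -Hw_S; apply: g.
apply: up_mono XM; apply/fintype.subsetP => j; rewrite !inE => /andP [jW HM]; rewrite jW /=.
apply/asboolP; case: (Hf j) => // /negP HN; exfalso; apply: HN.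
by apply: Hw_le HM; apply: leq_bigmax.
Qed.

Definition ch v := odflt finset.set0 [pick X in calA | X \subset Xinf v].

Lemma ch_spec v : good v -> ch v \in calA /\ ch v \subset Xinf v.
Proof.
move=> g; have := good_step g; rewrite /upclosure inE => /existsP [X /andP [XA XS]].
rewrite /ch; case: pickP => [Y /andP [YA YS]|H] //=.
by have := H X; rewrite XA XS.
Qed.

Lemma subtree_of_good v : T v -> good v ->
  exists S', is_Asubtree calA (subtree_at T v) S'.
Proof.
move=> Tv gv.
pose Wc : seq A -> unit -> {set A} := fun a _ => ch (v ++ a).
pose S' := GW_tree Wc tt.
have inv : forall r, S' r -> good (v ++ r) /\ T (v ++ r).
  elim/last_ind => [|a j IH]; first by rewrite cats0.
  move=> /GW_rcons [Sa ja]; have [ga Ta] := IH Sa.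
  have [_ sub] := ch_spec ga.
  have := fintype.subsetP sub j ja; rewrite inE => /andP [jW /asboolP gj].
  by rewrite -rcons_cat; split => //; apply/GW_rcons.
exists S'; split.
- by apply: GW_is_tree.
- by move=> r /inv [_ Tr].
- move=> a Sa; exists (ch (v ++ a)).
    by have [ga _] := inv a Sa; case: (ch_spec ga).
  by rewrite GW_W_of.
Qed.

Lemma afl_S N k v : @afl A calA N k.+1 (ext v (k.+1 + N)) =
  [forall j in W v om, @afl A calA N k (ext (rcons v j) (k + N))].
Proof. by apply: eq_forallb => j; rewrite ffunE. Qed.

Lemma dd_S N k v : @dd A N k.+1 (ext v (k.+1 + N)) =
  [forall j in W v om, @dd A N k (ext (rcons v j) (k + N))].
Proof. by apply: eq_forallb => j; rewrite ffunE. Qed.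

Lemma afl_mono k N M v : (N <= M)%N ->
  @afl A calA N k (ext v (k + N)) -> @afl A calA M k (ext v (k + M)).
Proof.
move=> NM; elim: k v => [|k IH] v.
  by apply: contra; apply: Hw_le.
rewrite !afl_S => /forallP H; apply/forallP => j; apply/implyP => jW.
by apply: IH; have := H j; rewrite jW.
Qed.

Lemma dd_indep k N M v : @dd A N k (ext v (k + N)) = @dd A M k (ext v (k + M)).
Proof.
elim: k v => [|k IH] v //.
by rewrite !dd_S; apply: eq_forallb => j; rewrite IH.
Qed.

Lemma exists_afl (Hall : forall w, T w -> exists N, ~~ Hw w N) k v :
  T v -> exists N, @afl A calA N k (ext v (k + N)).
Proof.
elim: k v => [|k IH] v Tv; first by apply: Hall.
have : forall j, exists N, j \in W v om -> @afl A calA N k (ext (rcons v j) (k + N)).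
  move=> j; case: (boolP (j \in W v om)) => jW; last by exists 0.
  by have [N HN] := IH (rcons v j) (proj2 (GW_rcons _ _ _ _) (conj Tv jW)); exists N.
move=> /choice [f Hf]; exists (\max_j f j); rewrite afl_S.
apply/forallP => j; apply/implyP => jW.
by apply: afl_mono (Hf j jW); apply: leq_bigmax.
Qed.

Lemma not_dd N u v : T (v ++ u) -> ~~ @dd A N (size u) (ext v (size u + N)).
Proof.
elim: u v => [|j u IH] v Tvu; first by [].
have -> : size (j :: u) = (size u).+1 by [].
rewrite dd_S negb_forall; apply/existsP; exists j.
rewrite negb_imply (GW_cat Tvu) /=; apply: IH; by rewrite cat_rcons.
Qed.

Hypothesis calA_elts_ne : (finset.set0 : {set A}) \notin calA.

Lemma bad_incl : nonextinct W om ->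
  ~ infinite_set [set v | T v /\ exists S', is_Asubtree calA (subtree_at T v) S'] ->
  forall k, exists N, @afl A calA N k (ext [::] (k + N)) && ~~ @dd A N k (ext [::] (k + N)).
Proof.
move=> nonext Hinf.
have Hall : forall w, T w -> exists N, ~~ Hw w N.
  move=> w Tw; apply: contrapT => Hn.
  have g : good w.
    by move=> N; apply: contrapT => h; apply: Hn; exists N; apply/negP.
  have [S' HS'] := subtree_of_good Tw g.
  by apply: Hinf; apply: (infinite_of calA_elts_ne Tw HS').
move=> k; have [N HN] := exists_afl Hall k (GW_nil W om).
exists N; rewrite HN /=.
have [u [su Tu]] := nonext k.
by have := @not_dd N u [::] Tu; rewrite su.
Qed.

End Construct.


Lemma mu_bigcup_le (d : measure_display) (Omega : measurableType d) (R : realType)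
  (P : probability Omega R) (F : nat -> set Omega) (b : \bar R) :
  (forall N, measurable (F N)) -> (forall N, F N `<=` F N.+1) ->
  (forall N, (P (F N) <= b)%E) -> (P (\bigcup_N F N) <= b)%E.
Proof.
move=> Fm Fi Fb.
have mU : measurable (\bigcup_N F N) by apply: bigcupT_measurable.
have Hnd : {homo F : n m / (n <= m)%N >-> (n <= m)%O}.
  move=> n m nm; rewrite subsetEset; elim: m nm => [|m IH].
    by rewrite leqn0 => /eqP ->.
  rewrite leq_eqVlt => /orP [/eqP -> //|]; rewrite ltnS => nm.
  by apply: subset_trans (IH nm) (Fi m).
have H := @nondecreasing_cvg_mu _ _ R P F Fm mU Hnd.
rewrite -(cvg_lim (@ereal_hausdorff R) H); apply: lime_le.
  by apply/cvg_ex; eexists; exact: H.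
by near=> N; apply: Fb.
Unshelve. all: by end_near.
Qed.

Theorem corollary2p12
  (R : realType) (d : measure_display) (Omega : measurableType d)
  (P : probability Omega R) (A : finType)
  (p : {set A} -> R) (W : seq A -> Omega -> {set A})
  (calA : {set {set A}})
  (* each offspring set W v is a random variable *)
  (W_meas : forall v B, measurable [set om | W v om = B])
  (* the W v are i.i.d. with law p *)
  (W_iid : forall (vs : seq (seq A)) (Bs : seq A -> {set A}), uniq vs ->
      P (\big[setI/setT]_(v <- vs) [set om | W v om = Bs v])
      = ((\prod_(v <- vs) p (Bs v))%:E))
  (* P(i \in W) > 0 for every i *)
  (p_pos : forall i : A, 0 < \sum_(B : {set A} | i \in B) p B)
  (* supercritical: E|W| > 1 *)
  (supercrit : 1 < \sum_(B : {set A}) p B * (#|B|%:R))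
  (calA_ne : calA != finset.set0)
  (calA_elts_ne : (finset.set0 : {set A}) \notin calA)
  (fixpt : exists s : R, 0 <= s < 1 /\ gA p calA s = s) :
  P.-negligible
    ([set om | nonextinct W om] `&`
     ~` [set om | infinite_set
                   [set v | GW_tree W om v /\
                            exists S', is_Asubtree calA (subtree_at (GW_tree W om) v) S']]).
Proof.
have p_ge0 : forall B, 0 <= p B.
  move=> B; have := W_iid [:: [::]] (fun _ => B) erefl.
  rewrite big_cons big_nil big_cons big_nil mulr1 setIT => E.
  by rewrite -lee_fin -E; apply: measure_ge0.
have p_sum1 : \sum_B p B = 1.
  have [_ E] := P_pred W_meas W_iid (n:=1) xpredT.
  have Eset : [set om | xpredT (extract W om [::] 1)] = setT by apply/seteqP.
  rewrite Eset probability_setT in E.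
  rewrite -sum_conf1; case: E => ->; apply: eq_bigr => c _; by rewrite mulr1.
case: fixpt => s0 [/andP [s00 s01] fs].
have [B0 [pB0 cB0]] := exists_B0 p_ge0 p_sum1 supercrit.
have [s [s0s s1 hs]] := exists_s p_ge0 p_sum1 supercrit s00 s01.
have s_ge0 : 0 <= s by apply: le_trans s0s.
pose E k N := [set om | @afl A calA N k (extract W om [::] (k + N)) &&
                       ~~ @dd A N k (extract W om [::] (k + N))].
have Emeas : forall k N, measurable (E k N).
  by move=> k N; apply: (P_pred W_meas W_iid (fun c => @afl A calA N k c && ~~ @dd A N k c)).1.
have PEle : forall k N, (P (E k N) <= (iter k (hgen p) s - iter k (hgen p) 0)%:E)%E.
  move=> k N; rewrite (P_pred W_meas W_iid (fun c => @afl A calA N k c && ~~ @dd A N k c)).2.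
  rewrite (E_bad p_sum1) lee_fin lerB //.
  have /andP [e0 e1] := econf_range p_ge0 calA p_sum1 N.
  have q1 := qN_le p_ge0 p_sum1 s00 s01 fs N.
  have [] := iter_mono p_ge0 p_sum1 k (_ : 0 <= 1 - econf p calA N) (_ : 1 - econf p calA N <= s) (ltW s1) => //.
  - by rewrite subr_ge0.
  - by apply: le_trans s0s.
have Einc : forall k N, E k N `<=` E k N.+1.
  move=> k N om /= /andP [h1 h2]; apply/andP; split.
    by apply: afl_mono h1.
  by rewrite (dd_indep W om k N.+1 N).
pose N0 := \bigcap_k \bigcup_N E k N.
have N0m : measurable N0.
  by apply: bigcapT_measurable => k; apply: bigcupT_measurable => N; apply: Emeas.
exists N0; split => //; last first.
  move=> om [/= nonext ninf] k _.
  by have [N HN] := bad_incl calA_elts_ne nonext ninf k; exists N.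
have bound : forall k, (P N0 <= (iter k (hgen p) s - iter k (hgen p) 0)%:E)%E.
  move=> k; apply: le_trans (_ : (P N0 <= P (\bigcup_N E k N))%E) _.
    apply: le_measure; rewrite ?inE //; first by apply: bigcupT_measurable.
    by move=> om H; apply: H.
  by apply: mu_bigcup_le.
have P0 : (0 <= P N0)%E by apply: measure_ge0.
have Pfin : P N0 \is a fin_num.
  by rewrite ge0_fin_numE //; apply: le_lt_trans (probability_le1 P N0m) _; rewrite ltey.
have M0 : fine (P N0) <= 0.
  apply: (main_analysis p_ge0 p_sum1 pB0 cB0 s_ge0 s1 hs) => k.
  by rewrite -lee_fin fineK.
apply/le_anti; rewrite P0 andbT -(fineK Pfin) lee_fin //.
Qed.
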